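(* Let $w\colon E\to(0,\infty)$ be a weight function on the edges of the hypercube graph, let $v$ be a game on $N$, and for each $i\in N$ let $v_{i,w}\in\ell^2(V)$ be the unique function with $v_{i,w}(\emptyset)=0$ and $\mathrm{d}v_{i,w} = P_w\mathrm{d}_i v$. Then: (a) $\sum_{i\in N} v_{i,w} = v$. (b) If $v(S\cup\{i\})-v(S)=0$ for all $S\subset N\setminus\{i\}$, then $v_{i,w}=0$. (c) If $\sigma$ is a permutation of $N$, then $(\sigma^*v)_{i,\sigma^*w} = \sigma^*(v_{\sigma(i),w})$ for all $i\in N$. In particular, if $\sigma$ swaps $i$ and $j$, $\sigma^*v=v$ and $\sigma^*w=w$, then $v_{i,w}=\sigma^*(v_{j,w})$. (d) For any two games $v,v'$ and $\alpha,\alpha'\in\mathbb{R}$, $(\alpha v+\alpha' v')_{i,w} = \alpha v_{i,w}+\alpha' v'_{i,w}$.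
   Context: Let $N$ be a finite set of players. A game is a function $v\colon 2^N\to\mathbb{R}$ with $v(\emptyset)=0$. The hypercube graph $G=(V,E)$ has $V=2^N$ and oriented edges $E=\{(S,S\cup\{i\}) : i\in N,\ S\subset N\setminus\{i\}\}$. $\ell^2(V)$ is the space of real functions on $V$. Given $w\colon E\to(0,\infty)$, $\ell^2_w(E)$ is the space of real functions on $E$ with inner product $\langle f,g\rangle_w=\sum_{e\in E}w(e)f(e)g(e)$. $\mathrm{d}\colon \ell^2(V)\to\ell^2_w(E)$ is $\mathrm{d}u(S,S\cup\{i\}) = u(S\cup\{i\})-u(S)$, with range $\mathcal{R}(\mathrm{d})$. For $i\in N$, $\mathrm{d}_i\colon\ell^2(V)\to\ell^2_w(E)$ is defined by $\mathrm{d}_i u(S,S\cup\{j\}) = u(S\cup\{i\})-u(S)$ if $j=i$ and $0$ if $j\ne i$. $P_w$ is the $\langle\cdot,\cdot\rangle_w$-orthogonal projection of $\ell^2_w(E)$ onto $\mathcal{R}(\mathrm{d})$. For a permutation $\sigma$ of $N$, $\sigma^*$ acts on vertex functions by $(\sigma^*u)(S)=u(\sigma(S))$ and on edge functions by $(\sigma^*f)(S,S\cup\{i\}) = f(\sigma(S),\sigma(S)\cup\{\sigma(i)\})$. *)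

(* Defs.v *)
From HB Require Import structures.
From mathcomp Require Import all_boot all_order all_algebra all_fingroup.
From Stdlib Require Import ClassicalEpsilon.
Set Implicit Arguments. Unset Strict Implicit. Unset Printing Implicit Defensive.
Import Order.TTheory GRing.Theory Num.Theory.
Local Open Scope ring_scope.

Section Hypercube.
Variables (R : realFieldType) (N : finType).

Definition vfun := {set N} -> R.
(* edge functions: f S i is the value on the oriented edge (S, S u {i}),
   meaningful only when i \notin S *)
Definition efun := {set N} -> N -> R.

Definition is_edge (S : {set N}) (i : N) : bool := i \notin S.

Definition is_game (v : vfun) : Prop := v set0 = 0.

Definition pos_weight (w : efun) : Prop := forall S i, is_edge S i -> 0 < w S i.

Definition eq_on_E (f g : efun) : Prop := forall S i, is_edge S i -> f S i = g S i.

Definition inner_w (w f g : efun) : R :=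
  \sum_(S : {set N}) \sum_(i in ~: S) w S i * f S i * g S i.

Definition dd (u : vfun) : efun := fun S i => u (S :|: [set i]) - u S.

Definition dd_i (i : N) (u : vfun) : efun :=
  fun S j => if j == i then u (S :|: [set i]) - u S else 0.

Definition in_range_d (f : efun) : Prop := exists u : vfun, eq_on_E f (dd u).

Definition is_proj (w f p : efun) : Prop :=
  in_range_d p /\ forall u : vfun, inner_w w (fun S i => f S i - p S i) (dd u) = 0.

Definition efun0 : efun := fun _ _ => 0.
Definition vfun0 : vfun := fun _ => 0.

(* P_w f (well defined, as an element of l^2_w(E), when w is positive) *)
Definition Pw (w f : efun) : efun := epsilon (inhabits efun0) (is_proj w f).

Definition player_comp (w : efun) (v : vfun) (i : N) : vfun :=
  epsilon (inhabits vfun0)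
    (fun u => u set0 = 0 /\ eq_on_E (dd u) (Pw w (dd_i i v))).

Definition pullV (s : {perm N}) (u : vfun) : vfun := fun S => u (s @: S).
Definition pullE (s : {perm N}) (f : efun) : efun := fun S i => f (s @: S) (s i).

End Hypercube.

(* Main.v *)
Require Import Defs.
From HB Require Import structures.
From mathcomp Require Import all_boot all_order all_algebra all_fingroup.
From mathcomp Require Import ring lra.
From Stdlib Require Import ClassicalEpsilon FunctionalExtensionality.
Import Order.TTheory GRing.Theory Num.Theory.
Local Open Scope ring_scope.
Set Implicit Arguments. Unset Strict Implicit. Unset Printing Implicit Defensive.

Section Proofs.
Variables (R : realFieldType) (N : finType).
Local Notation V := (vfun R N).
Local Notation E := (efun R N).

Lemma inner_ext (w : E) f f' g g' : eq_on_E f f' -> eq_on_E g g' ->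
  inner_w w f g = inner_w w f' g'.
Proof.
move=> Hf Hg; apply: eq_bigr => S _; apply: eq_bigr => i; rewrite in_setC => Hi.
by rewrite (Hf S i Hi) (Hg S i Hi).
Qed.

Lemma inner_extw (w w' : E) f g : eq_on_E w w' -> inner_w w f g = inner_w w' f g.
Proof.
move=> Hw; apply: eq_bigr => S _; apply: eq_bigr => i; rewrite in_setC => Hi.
by rewrite (Hw S i Hi).
Qed.

Lemma inner_lin1 (w : E) a b f g h :
  inner_w w (fun S i => a * f S i + b * g S i) h = a * inner_w w f h + b * inner_w w g h.
Proof.
rewrite /inner_w !mulr_sumr -big_split /=; apply: eq_bigr => S _.
rewrite !mulr_sumr -big_split /=; apply: eq_bigr => i _; ring.
Qed.

Lemma inner_sym (w : E) f g : inner_w w f g = inner_w w g f.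
Proof. apply: eq_bigr => S _; apply: eq_bigr => i _; ring. Qed.

Lemma inner_lin2 (w : E) a b f g h :
  inner_w w h (fun S i => a * f S i + b * g S i) = a * inner_w w h f + b * inner_w w h g.
Proof. by rewrite inner_sym inner_lin1 !(inner_sym _ h). Qed.

Lemma inner0l (w : E) g : inner_w w (@efun0 R N) g = 0.
Proof. by rewrite /inner_w big1 // => S _; rewrite big1 // => i _; rewrite /efun0 mulr0 mul0r. Qed.

Lemma inner0r (w : E) g : inner_w w g (@efun0 R N) = 0.
Proof. by rewrite inner_sym inner0l. Qed.

Lemma inner_suml (w : E) (F : N -> E) g :
  inner_w w (fun S j => \sum_(i : N) F i S j) g = \sum_(i : N) inner_w w (F i) g.
Proof.
rewrite /inner_w.
under eq_bigr => S _ do under eq_bigr => j _ do rewrite mulr_sumr mulr_suml.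
under eq_bigr => S _ do rewrite exchange_big /=.
by rewrite exchange_big.
Qed.

Lemma inner_eq0 (w : E) f : pos_weight w -> inner_w w f f = 0 -> eq_on_E f (@efun0 R N).
Proof.
move=> hw H S i Hi.
have term_ge0 : forall T j, j \in ~: T -> 0 <= w T j * f T j * f T j.
  move=> T j; rewrite in_setC => Hj; rewrite -mulrA mulr_ge0 //; first exact: ltW (hw _ _ Hj).
  by rewrite -expr2 sqr_ge0.
have HS : \sum_(j in ~: S) w S j * f S j * f S j = 0.
  apply: (psumr_eq0P _ H) => // T _; apply: sumr_ge0 => j Hj; exact: term_ge0.
have Hs : w S i * f S i * f S i = 0.
  apply: (psumr_eq0P _ HS); last by rewrite in_setC.
  move=> j Hj; exact: term_ge0.
move/eqP: Hs; rewrite -mulrA mulf_eq0 (gt_eqF (hw _ _ Hi)) /= mulf_eq0 orbb.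
by move/eqP.
Qed.


Lemma dd_lin a b (x y : V) :
  dd (fun S => a * x S + b * y S) = fun S i => a * dd x S i + b * dd y S i.
Proof.
apply: functional_extensionality => S; apply: functional_extensionality => i.
rewrite /dd; ring.
Qed.

Lemma pot_unique (u u' : V) : eq_on_E (dd u) (dd u') -> u set0 = u' set0 ->
  forall S, u S = u' S.
Proof.
move=> Hd H0 S.
suff: forall n (S : {set N}), #|S| = n -> u S = u' S by apply.
elim=> [|n IH] T HT.
  by move/eqP: HT; rewrite cards_eq0 => /eqP ->.
have [i Hi] : exists i, i \in T by apply/card_gt0P; rewrite HT.
have HT' : #|T :\ i| = n by move: HT; rewrite (cardsD1 i T) Hi add1n => -[].
have ST : T = (T :\ i) :|: [set i] by rewrite setUC setD1K.
have He : is_edge (T :\ i) i by rewrite /is_edge setD11.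
have := Hd _ _ He; rewrite /dd -ST (IH _ HT').
move=> H; lra.
Qed.

Lemma proj_unique (w : E) f p q : pos_weight w -> is_proj w f p -> is_proj w f q ->
  eq_on_E p q.
Proof.
move=> hw [[a Ha] Hp] [[b Hb] Hq].
have H : inner_w w (fun S i => p S i - q S i) (fun S i => p S i - q S i) = 0.
  rewrite (@inner_ext w _ (fun S i => 1 * (f S i - q S i) + (-1) * (f S i - p S i))
     _ (dd (fun S => 1 * a S + (-1) * b S))).
  - by rewrite inner_lin1 Hq Hp !mulr0 addr0.
  - by move=> S i _; ring.
  - by move=> S i Hi; rewrite Ha // Hb // /dd; ring.
move=> S i Hi; have := inner_eq0 hw H Hi; rewrite /efun0 => /eqP.
by rewrite subr_eq0 => /eqP.
Qed.

Lemma is_proj_ext (w : E) f f' p q : eq_on_E f f' -> eq_on_E p q ->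
  is_proj w f p -> is_proj w f' q.
Proof.
move=> Hf Hpq [[u Hu] Ho]; split.
  by exists u => S i Hi; rewrite -Hpq // Hu.
move=> x; rewrite -(Ho x); apply: inner_ext => // S i Hi.
by rewrite Hf // Hpq.
Qed.

Lemma is_proj_w (w w' : E) f p : eq_on_E w w' -> is_proj w f p -> is_proj w' f p.
Proof.
move=> Hw [Hr Ho]; split => // x; rewrite -(Ho x); symmetry; exact: inner_extw.
Qed.

Fixpoint inspan (us : seq V) (y : V) : Prop :=
  match us with
  | [::] => forall S, y S = 0
  | u :: us' => exists c, inspan us' (fun S => y S - c * u S)
  end.

Lemma inspan_lin us a b x y : inspan us x -> inspan us y ->
  inspan us (fun S => a * x S + b * y S).
Proof.
elim: us x y => [|u us IH] x y /=.
  by move=> Hx Hy S; rewrite Hx Hy !mulr0 addr0.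
move=> [c Hx] [d Hy]; exists (a * c + b * d).
have := IH _ _ Hx Hy.
congr inspan; apply: functional_extensionality => S; ring.
Qed.

Lemma span_cons (w : E) h u us :
  (forall y, inspan us y -> inner_w w h (dd y) = 0) -> inner_w w h (dd u) = 0 ->
  forall y, inspan (u :: us) y -> inner_w w h (dd y) = 0.
Proof.
move=> H1 H2 y [c Hc].
have -> : y = fun S => c * u S + 1 * (y S - c * u S).
  by apply: functional_extensionality => S; ring.
by rewrite dd_lin inner_lin2 H2 (H1 _ Hc) !mulr0 addr0.
Qed.

Lemma proj_span (w : E) us f : pos_weight w -> exists x, inspan us x /\
  forall y, inspan us y -> inner_w w (fun S i => f S i - dd x S i) (dd y) = 0.
Proof.
move=> hw; elim: us f => [|u us IH] f.
  exists (@vfun0 R N); split; first by [].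
  move=> y Hy; have -> : y = @vfun0 R N by apply: functional_extensionality.
  have -> : dd (@vfun0 R N) = @efun0 R N.
    by apply: functional_extensionality => S; apply: functional_extensionality => i;
       rewrite /dd /vfun0 subrr.
  exact: inner0r.
have [xf [Hxf Of]] := IH f.
have [xg [Hxg Og]] := IH (dd u).
pose z := fun S => u S - xg S.
have Ez : dd z = fun S i => dd u S i - dd xg S i.
  by apply: functional_extensionality => S; apply: functional_extensionality => i;
     rewrite /dd /z; ring.
have Oz : forall y, inspan us y -> inner_w w (dd z) (dd y) = 0.
  by move=> y Hy; rewrite Ez; exact: Og.
have Eu : dd u = fun S i => 1 * dd xg S i + 1 * dd z S i.
  by apply: functional_extensionality => S; apply: functional_extensionality => i;
     rewrite /dd /z; ring.
have [Z|NZ] := eqVneq (inner_w w (dd z) (dd z)) 0.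
  have Ez0 := inner_eq0 hw Z.
  exists xf; split.
    exists 0; have -> : (fun S => xf S - 0 * u S) = xf.
      by apply: functional_extensionality => S; ring.
    exact: Hxf.
  apply: span_cons; first exact: Of.
  rewrite Eu inner_lin2 (Of _ Hxg).
  rewrite (@inner_ext w _ (fun S i => f S i - dd xf S i) _ (@efun0 R N)) // ?inner0r ?mulr0 ?addr0 //.
pose t := inner_w w (fun S i => f S i - dd xf S i) (dd z) / inner_w w (dd z) (dd z).
exists (fun S => 1 * xf S + t * z S); split.
  exists t.
  have -> : (fun S => 1 * xf S + t * z S - t * u S) = (fun S => 1 * xf S + (- t) * xg S).
    by apply: functional_extensionality => S; rewrite /z; ring.
  exact: inspan_lin.
have Eh : (fun S i => f S i - dd (fun S0 => 1 * xf S0 + t * z S0) S i) =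
          (fun S i => 1 * (f S i - dd xf S i) + (- t) * dd z S i).
  by apply: functional_extensionality => S; apply: functional_extensionality => i;
     rewrite /dd; ring.
rewrite Eh.
have Hs : forall y, inspan us y ->
    inner_w w (fun S i => 1 * (f S i - dd xf S i) + (- t) * dd z S i) (dd y) = 0.
  by move=> y Hy; rewrite inner_lin1 (Of _ Hy) (Oz _ Hy) !mulr0 addr0.
apply: span_cons; first exact: Hs.
rewrite Eu inner_lin2 (Hs _ Hxg) inner_lin1 /t.
by rewrite mul1r mulNr !mul1r divfK // subrr add0r.
Qed.

Definition delta (T : {set N}) : V := fun S => if S == T then 1 else 0.

Lemma inspan_supp (s : seq {set N}) (y : V) :
  (forall S, S \notin s -> y S = 0) -> inspan (map delta s) y.
Proof.
elim: s y => [|T s IH] y /= Hy; first by move=> S; apply: Hy.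
exists (y T); apply: IH => S HS; rewrite /delta.
case: eqP => [->|/eqP HST]; first by rewrite mulr1 subrr.
by rewrite mulr0 subr0 Hy // in_cons negb_or HST.
Qed.

Lemma proj_exists (w : E) f : pos_weight w -> exists p, is_proj w f p.
Proof.
move=> hw; have [x [_ Hx]] := proj_span (map delta (enum {set N})) f hw.
exists (dd x); split; first by exists x.
move=> u; apply: Hx; apply: inspan_supp => S; by rewrite mem_enum.
Qed.

Lemma Pw_spec (w : E) f : pos_weight w -> is_proj w f (Pw w f).
Proof. move=> hw; rewrite /Pw; apply: epsilon_spec; exact: proj_exists. Qed.

Lemma pc_spec (w : E) (v : V) (i : N) : pos_weight w ->
  player_comp w v i set0 = 0 /\ is_proj w (dd_i i v) (dd (player_comp w v i)).
Proof.
move=> hw; have HP := Pw_spec (dd_i i v) hw.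
have [[u0 Hu0] _] := HP.
have Hex : exists u : V, u set0 = 0 /\ eq_on_E (dd u) (Pw w (dd_i i v)).
  exists (fun S => u0 S - u0 set0); split; first by rewrite subrr.
  by move=> S j Hj; rewrite Hu0 // /dd; ring.
have [H0 H1] : player_comp w v i set0 = 0 /\
    eq_on_E (dd (player_comp w v i)) (Pw w (dd_i i v)) := epsilon_spec _ _ Hex.
split => //; apply: (is_proj_ext _ _ HP) => // S j Hj; by rewrite H1.
Qed.

Lemma pc_char (w : E) (v : V) (i : N) (u : V) : pos_weight w -> u set0 = 0 ->
  is_proj w (dd_i i v) (dd u) -> forall S, player_comp w v i S = u S.
Proof.
move=> hw Hu0 Hp; have [H0 H1] := pc_spec v i hw.
apply: pot_unique; last by rewrite H0 Hu0.
exact: proj_unique hw H1 Hp.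
Qed.

Lemma part_a (w : E) (v : V) : pos_weight w -> v set0 = 0 ->
  forall S, \sum_(i : N) player_comp w v i S = v S.
Proof.
move=> hw Hv.
pose U : V := fun S => \sum_(i : N) player_comp w v i S.
suff H : forall S, v S = U S by move=> S; rewrite H.
apply: pot_unique; last first.
  by rewrite Hv /U big1 // => i _; case: (pc_spec v i hw).
apply: (@proj_unique w (dd v)) => //.
  split; first by exists v.
  move=> x; rewrite (@inner_ext w _ (@efun0 R N) _ (dd x)) ?inner0l //.
  by move=> S i _; rewrite subrr.
split; first by exists U.
move=> x.
rewrite (@inner_ext w _ (fun S j => \sum_(i : N)
   (fun i S j => dd_i i v S j - dd (player_comp w v i) S j) i S j) _ (dd x)) //.
  rewrite inner_suml big1 // => i _; case: (pc_spec v i hw) => _ [_ Ho]; exact: Ho.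
move=> S j Hj /=; rewrite sumrB.
congr (_ - _); last by rewrite /dd /U sumrB.
rewrite (bigD1 j) //= big1 ?addr0; first by rewrite /dd_i eqxx.
by move=> i Hij; rewrite /dd_i eq_sym (negbTE Hij).
Qed.

Lemma part_b (w : E) (v : V) (i : N) : pos_weight w ->
  (forall S : {set N}, i \notin S -> v (S :|: [set i]) - v S = 0) ->
  forall S, player_comp w v i S = 0.
Proof.
move=> hw Hv S; rewrite (@pc_char w v i (@vfun0 R N)) //.
split; first by exists (@vfun0 R N).
move=> x; rewrite (@inner_ext w _ (@efun0 R N) _ (dd x)) ?inner0l //.
move=> T j Hj; rewrite /dd_i /dd /vfun0 /efun0 subrr subr0.
by case: eqP => // Eji; rewrite Hv // -Eji.
Qed.

Lemma part_d (w : E) (v v' : V) (a a' : R) (i : N) : pos_weight w ->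
  forall S, player_comp w (fun T => a * v T + a' * v' T) i S
       = a * player_comp w v i S + a' * player_comp w v' i S.
Proof.
move=> hw S.
have [H0 [_ Ho]] := pc_spec v i hw.
have [H0' [_ Ho']] := pc_spec v' i hw.
rewrite (@pc_char w _ i (fun S => a * player_comp w v i S + a' * player_comp w v' i S)) //.
  by rewrite H0 H0' !mulr0 addr0.
split; first by eexists.
move=> x.
have -> : (fun S j => dd_i i (fun T => a * v T + a' * v' T) S j -
     dd (fun S => a * player_comp w v i S + a' * player_comp w v' i S) S j) =
   (fun S j => a * (dd_i i v S j - dd (player_comp w v i) S j) +
               a' * (dd_i i v' S j - dd (player_comp w v' i) S j)).
  apply: functional_extensionality => T; apply: functional_extensionality => j.
  rewrite /dd_i /dd; case: eqP => _; ring.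
by rewrite inner_lin1 Ho Ho' !mulr0 addr0.
Qed.

Lemma imset_pull (s : {perm N}) S j : s @: (S :|: [set j]) = s @: S :|: [set s j].
Proof. by rewrite imsetU imset_set1. Qed.

Lemma dd_pull (s : {perm N}) (x : V) : dd (pullV s x) = pullE s (dd x).
Proof.
apply: functional_extensionality => S; apply: functional_extensionality => j.
by rewrite /dd /pullV /pullE imset_pull.
Qed.

Lemma ddi_pull (s : {perm N}) i (v : V) : dd_i i (pullV s v) = pullE s (dd_i (s i) v).
Proof.
apply: functional_extensionality => S; apply: functional_extensionality => j.
rewrite /dd_i /pullE /pullV (inj_eq (@perm_inj _ s)).
by case: eqP => // _; rewrite imset_pull.
Qed.

Lemma pullVK (s : {perm N}) (x : V) : pullV s (pullV s^-1 x) = x.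
Proof.
apply: functional_extensionality => S; rewrite /pullV -imset_comp.
by rewrite (eq_imset _ (permK s)) imset_id.
Qed.

Lemma inner_pull (s : {perm N}) (w f g : E) :
  inner_w (pullE s w) (pullE s f) (pullE s g) = inner_w w f g.
Proof.
rewrite /inner_w /pullE.
rewrite [RHS](reindex_inj (imset_inj (@perm_inj _ s))) /=.
apply: eq_bigr => S _.
rewrite [RHS](reindex_inj (@perm_inj _ s)) /=.
by apply: eq_bigl => i; rewrite !in_setC mem_imset //; apply: perm_inj.
Qed.

Lemma pos_pull (s : {perm N}) (w : E) : pos_weight w -> pos_weight (pullE s w).
Proof.
move=> hw S j Hj; apply: hw; rewrite /is_edge mem_imset //; exact: perm_inj.
Qed.

Lemma part_c (w : E) (v : V) (s : {perm N}) (i : N) : pos_weight w ->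
  forall S, player_comp (pullE s w) (pullV s v) i S = pullV s (player_comp w v (s i)) S.
Proof.
move=> hw S; apply: (@pc_char (pullE s w) (pullV s v) i (pullV s (player_comp w v (s i))) (pos_pull s hw)).
  by rewrite /pullV imset0; case: (pc_spec v (s i) hw).
have [_ [_ Ho]] := pc_spec v (s i) hw.
rewrite ddi_pull dd_pull; split; first by exists (pullV s (player_comp w v (s i))); rewrite dd_pull.
move=> x; rewrite -(pullVK s x) dd_pull.
rewrite -[X in inner_w _ X _ = _]/(pullE s (fun S j => dd_i (s i) v S j - dd (player_comp w v (s i)) S j)).
by rewrite inner_pull Ho.
Qed.
End Proofs.

Theorem theorem4p1 (R : realFieldType) (N : finType) (w : efun R N)
  (hw : pos_weight w) :
  (* (a) efficiency *)
  (forall v : vfun R N, is_game v ->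
     forall S : {set N}, \sum_(i : N) (player_comp w v i S) = v S)
  /\
  (* (b) null player *)
  (forall (v : vfun R N) (i : N), is_game v ->
     (forall S : {set N}, i \notin S -> v (S :|: [set i]) - v S = 0) ->
     forall S : {set N}, player_comp w v i S = 0)
  /\
  (* (c) symmetry / equivariance *)
  (forall (v : vfun R N) (s : {perm N}), is_game v ->
     forall (i : N) (S : {set N}),
       player_comp (pullE s w) (pullV s v) i S = pullV s (player_comp w v (s i)) S)
  /\
  (forall (v : vfun R N) (i j : N), is_game v ->
     (forall S : {set N}, pullV (tperm i j) v S = v S) ->
     eq_on_E (pullE (tperm i j) w) w ->
     forall S : {set N}, player_comp w v i S = pullV (tperm i j) (player_comp w v j) S)
  /\
  (* (d) linearity *)
  (forall (v v' : vfun R N) (a a' : R) (i : N), is_game v -> is_game v' ->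
     forall S : {set N},
       player_comp w (fun T => a * v T + a' * v' T) i S
       = a * player_comp w v i S + a' * player_comp w v' i S).

Proof.
split; first by move=> v Hv S; apply: part_a.
split; first by move=> v i _ Hv S; apply: part_b.
split; first by move=> v s _ i S; apply: part_c.
split; last by move=> v v' a a' i _ _ S; apply: part_d.
move=> v i j _ Hv Hw S.
have := part_c v (tperm i j) i hw S; rewrite tpermL => <-.
symmetry; apply: (@pc_char _ _ (pullE (tperm i j) w) (pullV (tperm i j) v) i
   (player_comp w v i) (pos_pull _ hw)).
  by case: (pc_spec v i hw).
have -> : pullV (tperm i j) v = v by apply: functional_extensionality.
apply: (@is_proj_w _ _ w) => [T k Hk|]; first by rewrite Hw.
by case: (pc_spec v i hw).
Qed.
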